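(* Let $(s,g)\in\mathcal{S}\times\mathcal{S}$ with $s\neq g$. Assume the local embedding error is bounded as $$\sup_{s'\in N(s)\cup\{s\}}\bigl|d^*(s',g)-\|\phi(s')-\phi(g)\|\bigr|\le\epsilon_e,$$ and the directional movement error is bounded as $\|z'^*(s,g)-\hat z'(s,g)\|\le\epsilon_d$. If $4\epsilon_e+\epsilon_d<1$, then $\hat\pi(s,g)$ is an optimal action at $(s,g)$, i.e. $d^*(p(s,\hat\pi(s,g)),g)=d^*(s,g)-1$.
   Context: Consider a deterministic Markov decision process with state space $\mathcal{S}$, action space $\mathcal{A}$ and deterministic transition function $p:\mathcal{S}\times\mathcal{A}\to\mathcal{S}$. Let $d^*:\mathcal{S}\times\mathcal{S}\to\mathbb{R}$ be the optimal temporal distance: $d^*(s,g)$ is the minimum number of time steps needed to reach $g$ from $s$, so it is a nonnegative integer and $d^*(s,s)=0$. Let $\phi:\mathcal{S}\to\mathcal{Z}$ be a map into a real Hilbert space with inner product $\langle\cdot,\cdot\rangle$ and induced norm $\|\cdot\|$. Let $N(s):=\{p(s,a):a\in\mathcal{A}\}$ be the set of neighbor states of $s$. For a state $s$ and a goal $g$ define $$z'^*(s,g):=\phi(s)+\frac{\phi(g)-\phi(s)}{\|\phi(g)-\phi(s)\|},$$ $$\hat\pi(s,g):=\arg\max_{a\in\mathcal{A}}\Bigl\langle\phi(s')-\phi(s),\frac{\phi(g)-\phi(s)}{\|\phi(g)-\phi(s)\|}\Bigr\rangle\ \text{ subject to } s'=p(s,a),\ \|\phi(s)-\phi(s')\|\le1,$$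 $$\hat z'(s,g):=\phi\bigl(p(s,\hat\pi(s,g))\bigr).$$ An action $a$ is optimal at $(s,g)$ if it reduces the temporal distance to $g$ by one, i.e. $d^*(p(s,a),g)=d^*(s,g)-1$. *)

(* Defs.v *)
From HB Require Import structures.
From mathcomp Require Import all_boot all_order all_algebra.
From mathcomp Require Import reals.
Set Implicit Arguments. Unset Strict Implicit. Unset Printing Implicit Defensive.
Import Order.TTheory GRing.Theory Num.Theory.
Local Open Scope ring_scope.

Section InnerProduct.
Variables (R : realType) (V : lmodType R).

Definition is_inner_product (ip : V -> V -> R) : Prop :=
  [/\ forall x y, ip x y = ip y x,
      forall a x y z, ip (a *: x + y) z = a * ip x z + ip y z,
      forall x, 0 <= ip x x
    & forall x, ip x x = 0 -> x = 0].

Definition ipnorm (ip : V -> V -> R) (x : V) : R := Num.sqrt (ip x x).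

Definition ip_complete (ip : V -> V -> R) : Prop :=
  forall u : nat -> V,
    (forall e : R, 0 < e -> exists N : nat, forall m n : nat,
        (N <= m)%N -> (N <= n)%N -> ipnorm ip (u m - u n) < e) ->
    exists l : V, forall e : R, 0 < e -> exists N : nat, forall n : nat,
        (N <= n)%N -> ipnorm ip (u n - l) < e.

Definition zstar {S : Type} (ip : V -> V -> R) (phi : S -> V) (s g : S) : V :=
  phi s + (ipnorm ip (phi g - phi s))^-1 *: (phi g - phi s).

End InnerProduct.

Section MDP.
Variables (S A : Type) (p : S -> A -> S).

Definition reach_in (s g : S) (n : nat) : Prop :=
  exists l : seq A, size l = n /\ foldl p s l = g.

Definition is_optimal_temporal_distance (d : S -> S -> nat) : Prop :=
  forall s g, reach_in s g (d s g) /\ (forall m, reach_in s g m -> (d s g <= m)%N).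

End MDP.

Section Policy.
Variables (R : realType) (V : lmodType R) (S A : Type) (p : S -> A -> S).
Variables (ip : V -> V -> R) (phi : S -> V).

Definition hat_objective (s g : S) (a : A) : R :=
  ip (phi (p s a) - phi s) ((ipnorm ip (phi g - phi s))^-1 *: (phi g - phi s)).

Definition hat_feasible (s : S) (a : A) : Prop :=
  ipnorm ip (phi s - phi (p s a)) <= 1.

Definition is_hat_pi (s g : S) (a : A) : Prop :=
  hat_feasible s a /\ (forall b, hat_feasible s b -> hat_objective s g b <= hat_objective s g a).

End Policy.

(* Main.v *)
Require Import Defs.
From HB Require Import structures.
From mathcomp Require Import all_boot all_order all_algebra.
From mathcomp Require Import reals.
From mathcomp Require Import ring lra.
Import Order.TTheory GRing.Theory Num.Theory.
Local Open Scope ring_scope.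

Section IP.
Variables (R : realType) (V : lmodType R) (ip : V -> V -> R).
Hypothesis Hip : is_inner_product ip.

Lemma ipD x y z : ip (x + y) z = ip x z + ip y z.
Proof. case: Hip => _ H _ _. by have := H 1 x y z; rewrite scale1r mul1r. Qed.

Lemma ipZ c x z : ip (c *: x) z = c * ip x z.
Proof.
case: Hip => _ H _ _.
have h0 : ip 0 z = 0.
  have := H (-1) z z z. by rewrite scaleN1r addNr mulN1r addNr.
by rewrite -[c *: x]addr0 H h0 addr0.
Qed.

Lemma ip0r x : ip x 0 = 0.
Proof. case: Hip => S _ _ _. by rewrite S -(scale0r (0:V)) ipZ mul0r. Qed.

Lemma qD x y : ip (x + y) (x + y) = ip x x + 2 * ip x y + ip y y.
Proof.
case: Hip => S _ _ _.
rewrite ipD (S x (x+y)) (S y (x+y)) !ipD (S y x); lra.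
Qed.

Lemma qZ c x : ip (c *: x) (c *: x) = c ^+ 2 * ip x x.
Proof.
case: Hip => S _ _ _.
by rewrite ipZ S ipZ mulrA expr2.
Qed.

Lemma CS x y : ip x y ^+ 2 <= ip x x * ip y y.
Proof.
case: Hip => S _ P D.
have [c0|cpos] := eqVneq (ip y y) 0.
  by rewrite (D _ c0) !ip0r expr0n mulr0.
have cgt : 0 < ip y y by rewrite lt_def cpos P.
set b := ip x y. set c := ip y y.
have := P (x + (- b / c) *: y).
rewrite qD qZ (S x) ipZ (S y x) -/b -/c.
move=> h.
rewrite -subr_ge0.
have E : ip x x * c - b ^+ 2 = (ip x x + 2 * (- b / c * b) + (- b / c) ^+ 2 * c) * c.
  by field; rewrite lt0r_neq0.
rewrite E; exact: mulr_ge0 h (ltW cgt).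
Qed.

Lemma nrm_ge0 x : 0 <= ipnorm ip x.
Proof. exact: sqrtr_ge0. Qed.

Lemma nrm_tri x y : ipnorm ip (x + y) <= ipnorm ip x + ipnorm ip y.
Proof.
case: Hip => S _ P D.
rewrite /ipnorm.
set nx := Num.sqrt (ip x x). set ny := Num.sqrt (ip y y).
have nx0 : 0 <= nx := sqrtr_ge0 _. have ny0 : 0 <= ny := sqrtr_ge0 _.
rewrite -(ger0_norm (addr_ge0 nx0 ny0)) -sqrtr_sqr ler_sqrt; last exact: sqr_ge0.
have hb : ip x y <= nx * ny.
  apply: le_trans (ler_norm _) _.
  rewrite -sqrtr_sqr /nx /ny -sqrtrM // ler_sqrt; last exact: mulr_ge0.
  exact: CS.
rewrite qD sqrrD -(sqr_sqrtr (P x)) -(sqr_sqrtr (P y)) -/nx -/ny.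
lra.
Qed.

Lemma nrmZ c x : ipnorm ip (c *: x) = `|c| * ipnorm ip x.
Proof.
case: Hip => S _ P D.
by rewrite /ipnorm qZ sqrtrM ?sqr_ge0 // sqrtr_sqr.
Qed.

Lemma nrmN x : ipnorm ip (- x) = ipnorm ip x.
Proof. by rewrite -scaleN1r nrmZ normrN normr1 mul1r. Qed.

End IP.
Arguments nrm_tri {R V ip} Hip x y.
Arguments nrmZ {R V ip} Hip c x.
Arguments nrmN {R V ip} Hip x.

Theorem theoremC1 (R : realType) (V : lmodType R) (ip : V -> V -> R)
  (Hip : is_inner_product ip) (Hcomplete : ip_complete ip)
  (S A : Type) (p : S -> A -> S) (d : S -> S -> nat)
  (Hd : is_optimal_temporal_distance p d)
  (phi : S -> V) (s g : S) (eps_e eps_d : R) (a : A) :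
  s <> g ->
  (forall s', (s' = s \/ exists b : A, s' = p s b) ->
     `| (d s' g)%:R - ipnorm ip (phi s' - phi g) | <= eps_e) ->
  is_hat_pi p ip phi s g a ->
  ipnorm ip (zstar ip phi s g - phi (p s a)) <= eps_d ->
  4 * eps_e + eps_d < 1 ->
  ((d (p s a) g)%:R = (d s g)%:R - 1 :> R).
Proof.
move=> sg He _ Hz Heps.
set D := d s g. set s' := p s a. set D' := d s' g.
have D1 : (1 <= D)%N.
  case: (Hd s g) => [[l [sz fl]] _].
  rewrite -/D in sz; case: D sz => // sz.
  by case: l sz fl => // _ /= fl; exfalso; apply: sg.
have DD' : (D <= D'.+1)%N.
  case: (Hd s' g) => [[l [sz fl]] _].
  case: (Hd s g) => [_ H]; apply: H.
  by exists (a :: l); rewrite /= sz fl.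
have Hs := He s (or_introl erefl).
have Hs' := He s' (or_intror (ex_intro _ a erefl)).
rewrite -/D in Hs; rewrite -/D' in Hs'.
set l := ipnorm ip (phi s - phi g) in Hs.
set l' := ipnorm ip (phi s' - phi g) in Hs'.
have ee0 : 0 <= eps_e := le_trans (normr_ge0 _) Hs.
have ed0 : 0 <= eps_d := le_trans (sqrtr_ge0 _) Hz.
have D1R : 1 <= D%:R :> R by rewrite ler1n.
move/ler_normlP: Hs => -[Hs1 Hs2].
move/ler_normlP: Hs' => -[Hs1' Hs2'].
have lpos : 0 < l by lra.
set w := phi g - phi s.
have lw : ipnorm ip w = l by rewrite /l -(nrmN Hip) opprB.
have ez : zstar ip phi s g - phi g = (l^-1 - 1) *: w.
  rewrite /zstar -/w lw scalerBl scale1r.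
  rewrite /w; set u := _ *: _.
  by rewrite addrAC addrC opprB.
have nz : ipnorm ip (zstar ip phi s g - phi g) = `|1 - l|.
  rewrite ez (nrmZ Hip) lw -(gtr0_norm lpos) -normrM (gtr0_norm lpos) mulrBl mulVf ?mul1r //.
  exact: lt0r_neq0.
have e' : phi s' - phi g = (zstar ip phi s g - phi g) + - (zstar ip phi s g - phi s').
  by rewrite opprB [RHS]addrC addrA subrK.
have Hl' : l' <= `|1 - l| + eps_d.
  rewrite /l' e'; apply: le_trans (nrm_tri Hip _ _) _.
  by rewrite nz (nrmN Hip); apply: lerD.
have H1l : `|1 - l| <= D%:R - 1 + eps_e.
  apply/ler_normlP; split; lra.
have lt : D'%:R < D%:R :> R by lra.
rewrite ltr_nat in lt.
have -> : D = (D' + 1)%N.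
  by apply/eqP; rewrite eqn_leq addn1 lt DD'.
by rewrite natrD addrK.
Qed.
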